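(* Let $\lambda>0$ and let $h$ be any left-invariant metric on $G$. Then: (1) the unique inverse-linear path from $h_0$ to $h$ is nonnegative if and only if the unique inverse-linear path from $\lambda h_0$ to $h$ is nonnegative; (2) the unique inverse-linear path from $h_0$ to $h$ is locally nonnegative if and only if the unique inverse-linear path from $\lambda h_0$ to $h$ is locally nonnegative; (3) the unique inverse-linear path from $h_0$ to $h$ is infinitesimally nonnegative if and only if the unique inverse-linear path from $\lambda h_0$ to $h$ is infinitesimally nonnegative.
   Context: $G$ is a compact Lie group with Lie algebra $\mathfrak g$ and bi-invariant metric $h_0$. For a bi-invariant metric $b$ and a left-invariant metric $h$, let $\Phi$ be the $b$-self-adjoint positive definite endomorphism of $\mathfrak g$ with $h(X,Y)=b(\Phi X,Y)$. The unique inverse-linear path from $b$ to $h$ is $\Phi_t=(I-t\Psi)^{-1}$ with $\Psi=I-\Phi^{-1}$, giving left-invariant metrics $h_t(X,Y)=b(\Phi_tX,Y)$ with $h_0$-path starting at $b$ ($t=0$) and ending at $h$ ($t=1$). The unnormalized sectional curvature is $k_h(Z_1,Z_2)=h(R_h(Z_1,Z_2)Z_2,Z_1)$ and for fixed $X,Y\in\mathfrak g$, $\kappa(t)=k_{h_t}(\Phi_t^{-1}X,\Phi_t^{-1}Y)$. The path is nonnegative if $h_t$ has nonnegative sectional curvature for all $0\le t\le1$; infinitesimally nonnegative if for every $X,Y\in\mathfrak g$ there is $\varepsilon>0$ with $\kappa(t)\ge0$ for $t\in[0,\varepsilon)$; locally nonnegative if one $\varepsilon>0$ works for all pairs $X,Y$.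 *)

(* Defs.v *)
(* The compact Lie group G enters only through its Lie
   algebra g = R^n (column vectors), with bracket given by structure
   constants c; left-invariant metrics are positive definite symmetric
   matrices M, h(X,Y) = X^T M Y. *)
From HB Require Import structures.
From mathcomp Require Import all_boot all_order all_algebra.
From mathcomp Require Import reals.
Set Implicit Arguments. Unset Strict Implicit. Unset Printing Implicit Defensive.
Import Order.TTheory GRing.Theory Num.Theory.
Local Open Scope ring_scope.

Section LieDefs.
Variables (R : realType) (n : nat).
Implicit Types (c : 'I_n -> 'I_n -> 'I_n -> R) (M B H : 'M[R]_n) (X Y Z : 'cV[R]_n).

(* matrix of ad_X : Y |-> [X,Y], with [e_i,e_j] = sum_k c i j k e_k *)
Definition adm c X : 'M[R]_n := \matrix_(k, j) \sum_i c i j k * X i 0.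
Definition bracket c X Y : 'cV[R]_n := adm c X *m Y.

Definition is_lie_algebra c : Prop :=
  (forall X Y, bracket c X Y = - bracket c Y X) /\
  (forall X Y Z, bracket c X (bracket c Y Z) + bracket c Y (bracket c Z X)
                 + bracket c Z (bracket c X Y) = 0).

Definition ip M X Y : R := (X^T *m M *m Y) 0 0.

Definition is_metric M : Prop :=
  M^T = M /\ forall X, X != 0 -> 0 < ip M X X.

Definition bi_invariant c M : Prop :=
  is_metric M /\
  forall X Y Z, ip M (bracket c X Y) Z + ip M Y (bracket c X Z) = 0.

(* Levi-Civita connection of the left-invariant metric M on left-invariant
   fields: nabla_X Y = 1/2 ([X,Y] - ad_X^* Y - ad_Y^* X), ad^* the M-adjoint *)
Definition adstar c M X : 'M[R]_n := invmx M *m (adm c X)^T *m M.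
Definition nabla c M X Y : 'cV[R]_n :=
  2^-1 *: (bracket c X Y - adstar c M X *m Y - adstar c M Y *m X).
Definition curv c M X Y Z : 'cV[R]_n :=
  nabla c M X (nabla c M Y Z) - nabla c M Y (nabla c M X Z)
  - nabla c M (bracket c X Y) Z.
(* unnormalized sectional curvature k_h(Z1,Z2) = h(R(Z1,Z2)Z2, Z1) *)
Definition seccurv c M X Y : R := ip M (curv c M X Y Y) X.

Definition Phi_of B H : 'M[R]_n := invmx B *m H.       (* h(X,Y) = b(Phi X, Y) *)
Definition Psi_of B H : 'M[R]_n := 1%:M - invmx (Phi_of B H).
Definition Phit B H (t : R) : 'M[R]_n := invmx (1%:M - t *: Psi_of B H).
(* h_t(X,Y) = b(Phi_t X, Y) *)
Definition ht B H (t : R) : 'M[R]_n := (Phit B H t)^T *m B.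

Definition kappa c B H X Y (t : R) : R :=
  seccurv c (ht B H t) (invmx (Phit B H t) *m X) (invmx (Phit B H t) *m Y).

Definition path_nonneg c B H : Prop :=
  forall t : R, 0 <= t <= 1 -> forall X Y, 0 <= seccurv c (ht B H t) X Y.

Definition path_inf_nonneg c B H : Prop :=
  forall X Y, exists2 eps : R, 0 < eps &
    forall t : R, 0 <= t < eps -> 0 <= kappa c B H X Y t.

Definition path_loc_nonneg c B H : Prop :=
  exists2 eps : R, 0 < eps &
    forall X Y (t : R), 0 <= t < eps -> 0 <= kappa c B H X Y t.

End LieDefs.

(* Main.v *)
Require Import Defs.
From HB Require Import structures.
From mathcomp Require Import all_boot all_order all_algebra.
From mathcomp Require Import reals.
From mathcomp Require Import ring lra.
Import Order.TTheory GRing.Theory Num.Theory.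
Local Open Scope ring_scope.

Section S.
Variables (R : realType) (n : nat) (c : 'I_n -> 'I_n -> 'I_n -> R).
Implicit Types (M B H : 'M[R]_n) (X Y Z : 'cV[R]_n).

Lemma pd_unit M : (forall X, X != 0 -> 0 < ip M X X) -> M \in unitmx.
Proof.
move=> pd; apply/negPn/negP => nu.
have : kermx M != 0 by rewrite kermx_eq0 row_free_unit.
case/rowV0Pn => v /sub_kermxP vM v0.
have := pd v^T; rewrite trmx_eq0 v0 => /(_ isT).
by rewrite /ip trmxK vM mul0mx mxE ltxx.
Qed.

Lemma trZ m p a (A : 'M[R]_(m,p)) : (a *: A)^T = a *: A^T.
Proof. by apply/matrixP => i j; rewrite !mxE. Qed.

Lemma ipZ M a b X Y : ip M (a *: X) (b *: Y) = a * b * ip M X Y.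
Proof.
by rewrite /ip -scalemxAr trZ -!scalemxAl !mxE mulrA (mulrC b).
Qed.

Lemma ipZM a M X Y : ip (a *: M) X Y = a * ip M X Y.
Proof. by rewrite /ip -scalemxAr -scalemxAl mxE. Qed.

Lemma admZ a X : adm c (a *: X) = a *: adm c X.
Proof.
apply/matrixP => k j; rewrite !mxE mulr_sumr; apply: eq_bigr => i _.
by rewrite mxE mulrCA.
Qed.

Lemma bracketZl a X Y : bracket c (a *: X) Y = a *: bracket c X Y.
Proof. by rewrite /bracket admZ scalemxAl. Qed.
Lemma bracketZr a X Y : bracket c X (a *: Y) = a *: bracket c X Y.
Proof. by rewrite /bracket scalemxAr. Qed.

Lemma adstarZ M a X : adstar c M (a *: X) = a *: adstar c M X.
Proof. by rewrite /adstar admZ trZ -scalemxAr -scalemxAl. Qed.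

Lemma adstarZM M a X : M \in unitmx -> a != 0 -> adstar c (a *: M) X = adstar c M X.
Proof.
move=> Mu a0; rewrite /adstar invmxZ ?unitmxZ ?unitfE //.
by rewrite -!scalemxAl -scalemxAr scalerA mulVf // scale1r.
Qed.

Lemma nablaZl M a X Y : nabla c M (a *: X) Y = a *: nabla c M X Y.
Proof.
rewrite /nabla bracketZl adstarZ -scalemxAl -scalemxAr.
by rewrite scalerA mulrC -scalerA !scalerBr.
Qed.
Lemma nablaZr M a X Y : nabla c M X (a *: Y) = a *: nabla c M X Y.
Proof.
rewrite /nabla bracketZr adstarZ -scalemxAl -scalemxAr.
by rewrite scalerA mulrC -scalerA !scalerBr.
Qed.

Lemma nablaZM M a : M \in unitmx -> a != 0 -> nabla c (a *: M) =2 nabla c M.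
Proof. by move=> Mu a0 X Y; rewrite /nabla !adstarZM. Qed.

Lemma seccurvZM M a X Y : M \in unitmx -> a != 0 ->
  seccurv c (a *: M) X Y = a * seccurv c M X Y.
Proof.
move=> Mu a0; rewrite /seccurv ipZM /curv !nablaZM //.
Qed.

Lemma curvZ M a X Y Z : curv c M (a *: X) (a *: Y) (a *: Z) = a ^+ 3 *: curv c M X Y Z.
Proof.
rewrite /curv; move: (nablaZl M) (nablaZr M) bracketZl bracketZr.
move: (nabla c M) (bracket c) => N Br NZl NZr BZl BZr.
do !rewrite ?NZr ?NZl ?BZl ?BZr.
rewrite !scalerA.
have e3 : a * a * a = a ^+ 3 by rewrite !exprS expr0 mulr1 mulrA.
by rewrite e3 !scalerBr.
Qed.

Lemma seccurvZ M a X Y : seccurv c M (a *: X) (a *: Y) = a ^+ 4 * seccurv c M X Y.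
Proof.
rewrite /seccurv curvZ ipZ; congr (_ * _).
by rewrite !exprS expr0 mulr1 !mulrA.
Qed.

Lemma ipD M1 M2 X : ip (M1 + M2) X X = ip M1 X X + ip M2 X X.
Proof. by rewrite /ip mulmxDr mulmxDl mxE. Qed.

Lemma Ps_unit B H s : (forall X, X != 0 -> 0 < ip B X X) ->
  (forall X, X != 0 -> 0 < ip H X X) -> 0 <= s <= 1 ->
  (1%:M - s *: Psi_of B H) \in unitmx.
Proof.
move=> hB hH /andP[s0 s1].
have Bu : B \in unitmx by apply: pd_unit.
have Hu : H \in unitmx by apply: pd_unit.
set Phi := invmx B *m H.
have Pu : Phi \in unitmx by rewrite unitmx_mul unitmx_inv Bu.
suff : Phi *m (1%:M - s *: Psi_of B H) \in unitmx by rewrite unitmx_mul => /andP[].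
have -> : Phi *m (1%:M - s *: Psi_of B H) = invmx B *m ((1 - s) *: H + s *: B).
  rewrite /Psi_of /Phi_of -/Phi mulmxBr mulmx1 -scalemxAr mulmxBr mulmx1 mulmxV //.
  rewrite mulmxDr -!scalemxAr mulVmx // -/Phi.
  by apply/matrixP => i j; rewrite !mxE; ring.
rewrite unitmx_mul unitmx_inv Bu /=; apply: pd_unit => X X0.
rewrite ipD !ipZM.
have := hB X X0; have := hH X X0; nra.
Qed.

Lemma key B H mu t : (forall X, X != 0 -> 0 < ip B X X) ->
  (forall X, X != 0 -> 0 < ip H X X) -> 0 < mu -> 0 < 1 - t + t * mu ->
  (1%:M - t *: Psi_of (mu *: B) H) =
  (1 - t + t * mu) *: (1%:M - (t * mu / (1 - t + t * mu)) *: Psi_of B H).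
Proof.
move=> hB hH mu0 k0.
have Bu : B \in unitmx by apply: pd_unit.
have Hu : H \in unitmx by apply: pd_unit.
have Pu : invmx B *m H \in unitmx by rewrite unitmx_mul unitmx_inv Bu.
rewrite /Psi_of /Phi_of invmxZ ?unitmxZ ?unitfE ?gt_eqF // -scalemxAl.
rewrite invmxZ ?unitmxZ ?unitfE ?invr_eq0 ?gt_eqF // invrK.
apply/matrixP => i j; rewrite !mxE; field.
by rewrite gt_eqF.
Qed.

Lemma rels B H mu t : (forall X, X != 0 -> 0 < ip B X X) ->
  (forall X, X != 0 -> 0 < ip H X X) -> 0 < mu -> 0 <= t <= 1 ->
  let k := 1 - t + t * mu in let s := t * mu / k in
  [/\ 0 < k, 0 <= s <= 1,
   forall X Y, seccurv c (ht (mu *: B) H t) X Y = mu / k * seccurv c (ht B H s) X Y &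
   forall X Y, kappa c (mu *: B) H X Y t = mu * k ^+ 3 * kappa c B H X Y s].
Proof.
move=> hB hH mu0 /andP[t0 t1] k s.
have Bu : B \in unitmx by apply: pd_unit.
have k0 : 0 < k by rewrite /k; nra.
have s01 : 0 <= s <= 1.
  apply/andP; split; first by rewrite /s divr_ge0 // ?mulr_ge0 // ltW.
  by rewrite /s ler_pdivrMr // mul1r /k; lra.
have Pe := key B H mu t hB hH mu0 k0.
have Pu := Ps_unit B H s hB hH s01.
have Phe : Phit (mu *: B) H t = k^-1 *: Phit B H s.
  by rewrite /Phit Pe invmxZ // unitmxZ ?unitfE ?gt_eqF.
have hte : ht (mu *: B) H t = (mu / k) *: ht B H s.
  by rewrite /ht Phe trZ -scalemxAl -scalemxAr scalerA mulrC.
have htu : ht B H s \in unitmx by rewrite unitmx_mul unitmx_tr unitmx_inv Pu.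
have mk0 : mu / k != 0 by rewrite gt_eqF // divr_gt0.
split => // X Y; first by rewrite hte seccurvZM.
rewrite /kappa hte /Phit !invmxK Pe -!scalemxAl seccurvZ seccurvZM //.
rewrite -/k -/s; field; by rewrite gt_eqF.
Qed.

Lemma small (mu eps t : R) : 0 < mu -> 0 < eps -> 0 <= t < eps / (1 + mu + eps) ->
  0 <= t <= 1 /\ t * mu / (1 - t + t * mu) < eps.
Proof.
move=> mu0 e0 /andP[t0 te].
have d0 : 0 < 1 + mu + eps by lra.
move: te; rewrite ltr_pdivlMr // => te.
have t1 : t < 1 by nra.
have k0 : 0 < 1 - t + t * mu by nra.
split; first by apply/andP; split; lra.
rewrite ltr_pdivrMr //.
have h1 : mu <= (1 - t + t * mu) * (1 + mu) by nra.
nra.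
Qed.

Lemma dir B H mu : (forall X, X != 0 -> 0 < ip B X X) ->
  (forall X, X != 0 -> 0 < ip H X X) -> 0 < mu ->
  (path_nonneg c B H -> path_nonneg c (mu *: B) H) /\
  (path_loc_nonneg c B H -> path_loc_nonneg c (mu *: B) H) /\
  (path_inf_nonneg c B H -> path_inf_nonneg c (mu *: B) H).
Proof.
move=> hB hH mu0; split; [|split].
- move=> P t t01 X Y.
  have [k0 s01 hs _] := rels B H mu t hB hH mu0 t01.
  rewrite hs; apply: mulr_ge0; last exact: P.
  by apply: divr_ge0; apply: ltW.
- case=> eps e0 P; exists (eps / (1 + mu + eps)).
    by rewrite divr_gt0 //; lra.
  move=> X Y t htt; have [t01 se] := small mu eps t mu0 e0 htt.
  have [k0 s01 _ hk] := rels B H mu t hB hH mu0 t01.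
  rewrite hk; apply: mulr_ge0; first by rewrite mulr_ge0 ?exprn_ge0 ?ltW.
  by apply: P; case/andP: s01 => -> _.
- move=> P X Y; case: (P X Y) => eps e0 {}P; exists (eps / (1 + mu + eps)).
    by rewrite divr_gt0 //; lra.
  move=> t htt; have [t01 se] := small mu eps t mu0 e0 htt.
  have [k0 s01 _ hk] := rels B H mu t hB hH mu0 t01.
  rewrite hk; apply: mulr_ge0; first by rewrite mulr_ge0 ?exprn_ge0 ?ltW.
  by apply: P; case/andP: s01 => -> _.
Qed.
End S.

Theorem mainTheorem14 (R : realType) (n : nat)
    (c : 'I_n -> 'I_n -> 'I_n -> R) (H0 H : 'M[R]_n) (lam : R) :
  is_lie_algebra c -> bi_invariant c H0 -> is_metric H -> 0 < lam ->
  (path_nonneg c H0 H <-> path_nonneg c (lam *: H0) H) /\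
  (path_loc_nonneg c H0 H <-> path_loc_nonneg c (lam *: H0) H) /\
  (path_inf_nonneg c H0 H <-> path_inf_nonneg c (lam *: H0) H).
Proof.
move=> _ [[_ hB] _] [_ hH] l0.
have hB' : forall X, X != 0 -> 0 < ip (lam *: H0) X X.
  by move=> X X0; rewrite ipZM mulr_gt0 // hB.
have il0 : 0 < lam^-1 by rewrite invr_gt0.
have [f1 [f2 f3]] := @dir R n c H0 H lam hB hH l0.
have [g1 [g2 g3]] := @dir R n c (lam *: H0) H lam^-1 hB' hH il0.
have e : lam^-1 *: (lam *: H0) = H0 by rewrite scalerA mulVf ?gt_eqF // scale1r.
rewrite e in g1 g2 g3.
split; [|split]; split; assumption.
Qed.
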